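(* Let $P_0,P_1,P_2\in\mathbb H$ be distinct, let $\alpha:=-1+\langle P_0,P_1\rangle+\langle P_1,P_2\rangle+\langle P_2,P_0\rangle$, $\chi:=\langle P_0\tilde\times P_1,P_2\rangle$, $d_0:=\sqrt{1-2\langle P_1,P_2\rangle}$, $d_1:=\sqrt{1-2\langle P_2,P_0\rangle}$, $d_2:=\sqrt{1-2\langle P_0,P_1\rangle}$ (indices in $\mathbb Z/3\mathbb Z$), and $\gamma:=3(d_0^2+1)(d_1^2+1)(d_2^2+1)$. Then $$(2\chi)^2\le\frac13\sum_{i=0}^2 d_i^2(d_{i+1}^2-3)(d_{i+2}^2-3)\qquad\text{and}\qquad -24\alpha\chi\le\gamma.$$
   Context: $\langle v,w\rangle=-v_1w_1+v_2w_2+v_3w_3$ on $\mathbb R^3$; $\mathbb H=\{P\in\mathbb R^3:\langle P,P\rangle=-1,\ P_1\ge1\}$; $v\tilde\times w:=J(v\times w)$ with $J=\mathrm{diag}(-1,1,1)$ and $\times$ the Euclidean cross product. *)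

(* Defs.v *)
From HB Require Import structures.
From mathcomp Require Import all_boot all_order all_algebra.
Set Implicit Arguments. Unset Strict Implicit. Unset Printing Implicit Defensive.
Import Order.TTheory GRing.Theory Num.Theory.
Local Open Scope ring_scope.

Section Minkowski.
Variable R : rcfType.

(* coordinates v_1, v_2, v_3 of the paper are v 0 c0, v 0 c1, v 0 c2 *)
Definition c0 : 'I_3 := @Ordinal 3 0 isT.
Definition c1 : 'I_3 := @Ordinal 3 1 isT.
Definition c2 : 'I_3 := @Ordinal 3 2 isT.

Definition mink (v w : 'rV[R]_3) : R :=
  - (v 0 c0 * w 0 c0) + v 0 c1 * w 0 c1 + v 0 c2 * w 0 c2.

Definition in_H (P : 'rV[R]_3) : Prop := mink P P = -1 /\ 1 <= P 0 c0.

Definition ecross (v w : 'rV[R]_3) : 'rV[R]_3 :=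
  \row_(i < 3) (match val i with
               | 0 => v 0 c1 * w 0 c2 - v 0 c2 * w 0 c1
               | 1 => v 0 c2 * w 0 c0 - v 0 c0 * w 0 c2
               | _ => v 0 c0 * w 0 c1 - v 0 c1 * w 0 c0
               end).

Definition Jmx : 'M[R]_3 := diag_mx (\row_(i < 3) (if i == c0 then -1 else 1)).

(* Lorentzian cross product v ~x w := J (v x w) (row-vector convention) *)
Definition lcross (v w : 'rV[R]_3) : 'rV[R]_3 := ecross v w *m Jmx.

End Minkowski.

(* Main.v *)
Require Import Defs.
From HB Require Import structures.
From mathcomp Require Import all_boot all_order all_algebra.
From mathcomp Require Import ring lra.
Import Order.TTheory GRing.Theory Num.Theory.
Local Open Scope ring_scope.

Lemma mink_le (R : rcfType) (P Q : 'rV[R]_3) :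
  in_H P -> in_H Q -> mink P Q <= -1.
Proof.
rewrite /in_H /mink => -[hP gP] [hQ gQ].
set p0 := P 0 c0 in hP gP *; set p1 := P 0 c1 in hP *; set p2 := P 0 c2 in hP *.
set q0 := Q 0 c0 in hQ gQ *; set q1 := Q 0 c1 in hQ *; set q2 := Q 0 c2 in hQ *.
have e : (p0 * q0 - 1) ^+ 2 - (p1 * q1 + p2 * q2) ^+ 2
         = (p1 * q2 - p2 * q1) ^+ 2 + (p0 - q0) ^+ 2.
  have hA : p0 * p0 - 1 - p1 * p1 - p2 * p2 = 0 by lra.
  have hB : q0 * q0 - 1 - q1 * q1 - q2 * q2 = 0 by lra.
  apply/eqP; rewrite -subr_eq0; apply/eqP.
  transitivity ((p0 * p0 - 1 - p1 * p1 - p2 * p2) * (q0 * q0 - 1)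
     + (p1 * p1 + p2 * p2) * (q0 * q0 - 1 - q1 * q1 - q2 * q2)); first ring.
  by rewrite hA hB; ring.
have h1 : (p1 * q1 + p2 * q2) ^+ 2 <= (p0 * q0 - 1) ^+ 2.
  rewrite -subr_ge0 e; apply: addr_ge0; exact: sqr_ge0.
have h2 : 0 <= p0 * q0 - 1 by nra.
nra.
Qed.

Lemma lcrossE (R : rcfType) (v w : 'rV[R]_3) :
  [/\ lcross v w 0 c0 = - (v 0 c1 * w 0 c2 - v 0 c2 * w 0 c1),
      lcross v w 0 c1 = v 0 c2 * w 0 c0 - v 0 c0 * w 0 c2 &
      lcross v w 0 c2 = v 0 c0 * w 0 c1 - v 0 c1 * w 0 c0].
Proof.
by rewrite /lcross /Jmx mul_mx_diag !mxE /= !mulrN1 !mulr1.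
Qed.

Theorem lemma3p4 (R : rcfType) (P0 P1 P2 : 'rV[R]_3) :
  in_H P0 -> in_H P1 -> in_H P2 ->
  P0 != P1 -> P1 != P2 -> P2 != P0 ->
  let alpha := -1 + mink P0 P1 + mink P1 P2 + mink P2 P0 in
  let chi := mink (lcross P0 P1) P2 in
  let d0 := Num.sqrt (1 - 2 * mink P1 P2) in
  let d1 := Num.sqrt (1 - 2 * mink P2 P0) in
  let d2 := Num.sqrt (1 - 2 * mink P0 P1) in
  let gamma := 3 * (d0 ^+ 2 + 1) * (d1 ^+ 2 + 1) * (d2 ^+ 2 + 1) in
  (2 * chi) ^+ 2 <= 3^-1 * (d0 ^+ 2 * (d1 ^+ 2 - 3) * (d2 ^+ 2 - 3)
                          + d1 ^+ 2 * (d2 ^+ 2 - 3) * (d0 ^+ 2 - 3)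
                          + d2 ^+ 2 * (d0 ^+ 2 - 3) * (d1 ^+ 2 - 3))
  /\ - (24 * alpha * chi) <= gamma.
Proof.
move=> H0 H1 H2 _ _ _ alpha chi d0 d1 d2 gamma.
have ha := @mink_le R P1 P2 H1 H2; have hb := @mink_le R P2 P0 H2 H0; have hc := @mink_le R P0 P1 H0 H1.
have e0 : d0 ^+ 2 = 1 - 2 * mink P1 P2 by rewrite sqr_sqrtr //; lra.
have e1 : d1 ^+ 2 = 1 - 2 * mink P2 P0 by rewrite sqr_sqrtr //; lra.
have e2 : d2 ^+ 2 = 1 - 2 * mink P0 P1 by rewrite sqr_sqrtr //; lra.
have echi : chi ^+ 2 = - (mink P0 P0 * mink P1 P1 * mink P2 P2
     + 2 * mink P0 P1 * mink P1 P2 * mink P2 P0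
     - mink P0 P0 * mink P1 P2 ^+ 2 - mink P1 P1 * mink P2 P0 ^+ 2
     - mink P2 P2 * mink P0 P1 ^+ 2).
  rewrite /chi /mink; case: (@lcrossE R P0 P1) => -> -> ->; ring.
move: H0 H1 H2 => [-> _] [-> _] [-> _] in echi.
rewrite /gamma e0 e1 e2 /alpha.
move: echi ha hb hc.
set a := mink P1 P2; set b := mink P2 P0; set c := mink P0 P1.
move: chi => x echi ha hb hc.
split.
  rewrite exprMn echi -subr_ge0.
  have -> : 3^-1 * ((1 - 2 * a) * (1 - 2 * b - 3) * (1 - 2 * c - 3) +
     (1 - 2 * b) * (1 - 2 * c - 3) * (1 - 2 * a - 3) +
     (1 - 2 * c) * (1 - 2 * a - 3) * (1 - 2 * b - 3)) -
     2 ^+ 2 * - (-1 * -1 * -1 + 2 * c * a * b - -1 * a ^+ 2 - -1 * b ^+ 2 - -1 * c ^+ 2)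
     = 2 * ((a - b) ^+ 2 + (b - c) ^+ 2 + (c - a) ^+ 2).
    by field.
  apply: mulr_ge0 => //; apply: addr_ge0; [apply: addr_ge0|]; exact: sqr_ge0.
set X := (1 - a - b - c) * x.
set Y := (1 - a) * (1 - b) * (1 - c).
have hY : 0 <= Y by rewrite /Y; apply: mulr_ge0; [apply: mulr_ge0|]; lra.
have hXY : X ^+ 2 <= Y ^+ 2.
  rewrite -subr_ge0.
  have -> : Y ^+ 2 - X ^+ 2 =
     ((-a - 1) * (-b - 1) * (-c - 1) - ((a+1)^+2 + (b+1)^+2 + (c+1)^+2)
       + 4 * (a + b + c + 3) - 8) ^+ 2.
    rewrite /X /Y; have -> : ((1 - a - b - c) * x) ^+ 2 = (1 - a - b - c) ^+ 2 * x ^+ 2 by ring.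
    rewrite echi; ring.
  exact: sqr_ge0.
have : X <= Y by nra.
rewrite /X /Y; lra.
Qed.
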